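(* Let $\alpha:\mathbb Z_+\times\mathbb Z_+\to\mathbb R$ be defined by $\alpha(0,s)=0$ for all $s\in\mathbb Z_+$ and, for $n\in\mathbb Z_+$, \[ \alpha(n+1,0)=\frac2{N^2}+\alpha(n,0)+\frac2{N^2}\sum_{s=1}^\infty\alpha(n,s)\mathrm{tr}(Q^s),\qquad \alpha(n+1,1)=-\frac2{N^2}+\frac{N-2}N\alpha(n,1)-\frac2{N^2}\sum_{s=1}^\infty\alpha(n,s)\mathrm{tr}(Q^s), \] \[ \alpha(n+1,s)=\frac{N-2}N\alpha(n,s)+\frac2N\alpha(n,s-1),\quad s\ge2 \] (so $\alpha(n,s)=0$ for $s\ge n+1$ and all sums are finite). Then \[ L_0^n(J)=J+\sum_{s=0}^\infty\alpha(n,s)Q^s\qquad\text{for all }n\in\mathbb Z_+. \] Moreover, if $Q$ is walk-regular, then $L^n(J)=L_0^n(J)=J+\sum_{s=0}^\infty\alpha(n,s)Q^s$ for all $n\in\mathbb N$.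
   Context: $E$ is a finite set with $N=\#E>8$ elements, listed in a fixed order; $\mathsf M_E$ is the space of complex $N\times N$ matrices indexed by $E\times E$. $|x\rangle$ (resp. $\langle x|$) is the column (resp. row) vector with 1 in coordinate $x$ and 0 elsewhere; $C^*$ denotes transpose. $Q$ is an irreducible stochastic matrix on $E$ with $Q(x,y)=Q(y,x)$ for all $x,y$ and $\mathrm{tr}(Q)=0$. $I$ is the identity and $J$ the matrix with all entries $1/N$. $Q$ is walk-regular if $Q^s(x,x)$ does not depend on $x\in E$ for every $s\in\mathbb Z_+$. Let $(U,V)$ be a random pair in $E\times E$ with $\mathbb P(U=x,V=y)=\frac1NQ(x,y)$ and $T=I-|U\rangle\langle U|+|U\rangle\langle V|$; the linear operator $L:\mathsf M_E\to\mathsf M_E$ is $L(C)=\mathbb E[T^*CT]$. The linear operator $L_0:\mathsf M_E\to\mathsf M_E$ is \[ L_0(C)=\frac{N-2}NC+\frac1N(CQ+QC)-\frac{2\,\mathrm{tr}(C)}{N^2}Q+\frac{2\,\mathrm{tr}(C)}{N^2}I. \] Powers $L^n$, $L_0^n$ denote $n$-fold composition ($L^0=L_0^0=$ identity). *)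

(* Defs.v *)
(* Complex matrices are modelled over an arbitrary
   numClosedFieldType C (e.g. the complex numbers); E = 'I_N. *)
From HB Require Import structures.
From mathcomp Require Import all_boot all_order all_algebra.
Set Implicit Arguments. Unset Strict Implicit. Unset Printing Implicit Defensive.
Import Order.TTheory GRing.Theory Num.Theory.
Local Open Scope ring_scope.

Section Defs.
Variables (C : numClosedFieldType) (N : nat).

Definition stochastic (Q : 'M[C]_N) : Prop :=
  (forall x y, 0 <= Q x y) /\ (forall x, \sum_y Q x y = 1).

Definition symmetric_mx (Q : 'M[C]_N) : Prop := forall x y, Q x y = Q y x.

Definition irreducible_mx (Q : 'M[C]_N) : Prop :=
  forall x y, exists n : nat, 0 < (Q ^+ n) x y.

Definition walk_regular (Q : 'M[C]_N) : Prop :=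
  forall (s : nat) (x y : 'I_N), (Q ^+ s) x x = (Q ^+ s) y y.

Definition Jmx : 'M[C]_N := const_mx (N%:R^-1).

Definition Tmx (x y : 'I_N) : 'M[C]_N :=
  1%:M - delta_mx x x + delta_mx x y.

(* L(C) = E[T^* C T], with P(U=x,V=y) = Q(x,y)/N and ^* = transpose *)
Definition Lop (Q : 'M[C]_N) (A : 'M[C]_N) : 'M[C]_N :=
  \sum_(x < N) \sum_(y < N) (N%:R^-1 * Q x y) *: ((Tmx x y)^T *m A *m Tmx x y).

Definition L0op (Q : 'M[C]_N) (A : 'M[C]_N) : 'M[C]_N :=
  ((N%:R - 2) / N%:R) *: A + N%:R^-1 *: (A *m Q + Q *m A)
  - (2 * \tr A / (N%:R ^+ 2)) *: Q + (2 * \tr A / (N%:R ^+ 2)) *: 1%:M.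

(* alpha(n,s); the sums over s >= 1 are truncated at s = n, beyond which
   alpha(n,s) = 0 (this vanishing is part of the theorem's conclusion). *)
Fixpoint alpha (Q : 'M[C]_N) (n : nat) : nat -> C :=
  match n with
  | 0 => fun _ => 0
  | n'.+1 => fun s =>
    let S := \sum_(1 <= t < n'.+1) alpha Q n' t * \tr (Q ^+ t) in
    match s with
    | 0 => 2 / (N%:R ^+ 2) + alpha Q n' 0 + 2 / (N%:R ^+ 2) * S
    | 1 => - (2 / (N%:R ^+ 2)) + (N%:R - 2) / N%:R * alpha Q n' 1
           - 2 / (N%:R ^+ 2) * S
    | s'.+1 => (N%:R - 2) / N%:R * alpha Q n' s'.+1 + 2 / N%:R * alpha Q n' s'
    end
  end.

End Defs.

(* Main.v *)
Require Import Defs.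
From HB Require Import structures.
From mathcomp Require Import all_boot all_order all_algebra.
From mathcomp Require Import ring lra.
Import Order.TTheory GRing.Theory Num.Theory.
Local Open Scope ring_scope.

Lemma DAD (C : numClosedFieldType) (N : nat) (A : 'M[C]_N) (a b c d : 'I_N) :
  delta_mx a b *m A *m delta_mx c d = A b c *: delta_mx a d.
Proof.
apply/matrixP => i j; rewrite !mxE (bigD1 c) //= big1 ?addr0; last first.
  by move=> k /negbTE kc; rewrite !mxE kc /= mulr0.
rewrite mxE (bigD1 b) //= big1 ?addr0; last first.
  by move=> k /negbTE kb; rewrite !mxE kb andbF mul0r.
rewrite !mxE !eqxx !andbT.
by case: (i == a); case: (j == d); rewrite /= ?mulr1 ?mul1r ?mulr0 ?mul0r.
Qed.

Lemma Texp (C : numClosedFieldType) (N : nat) (A : 'M[C]_N) (x y : 'I_N) :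
  (Tmx C x y)^T *m A *m Tmx C x y =
  A - A *m delta_mx x x + A *m delta_mx x y - delta_mx x x *m A + delta_mx y x *m A
  + A x x *: (delta_mx x x - delta_mx x y - delta_mx y x + delta_mx y y).
Proof.
rewrite /Tmx.
have -> : (1%:M - delta_mx x x + delta_mx x y)^T = 1%:M - delta_mx x x + delta_mx y x :> 'M[C]_N.
  by rewrite !raddfD raddfN /= trmx1 !trmx_delta.
rewrite !mulmxDr ?mulmxN !mulmxDl ?mulNmx !mul1mx !mulmx1 ?mulmxN ?mulNmx !DAD.
move: (A *m delta_mx x x) (A *m delta_mx x y) (delta_mx x x *m A) (delta_mx y x *m A) => P1 P2 P3 P4.
apply/matrixP => i j; rewrite !mxE.
ring.
Qed.

Lemma sum2D (R : zmodType) n (F G : 'I_n -> 'I_n -> R) :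
  \sum_x \sum_y (F x y + G x y) = \sum_x \sum_y F x y + \sum_x \sum_y G x y.
Proof. by rewrite -big_split; apply: eq_bigr => x _; rewrite big_split. Qed.

Lemma sum2B (R : zmodType) n (F G : 'I_n -> 'I_n -> R) :
  \sum_x \sum_y (F x y - G x y) = \sum_x \sum_y F x y - \sum_x \sum_y G x y.
Proof. by rewrite -sumrB; apply: eq_bigr => x _; rewrite sumrB. Qed.

Lemma sum2Ml (C : numClosedFieldType) n (w : 'I_n -> 'I_n -> C) (A : 'M[C]_n) (F : 'I_n -> 'I_n -> 'M[C]_n) :
  \sum_x \sum_y w x y *: (A *m F x y) = A *m (\sum_x \sum_y w x y *: F x y).
Proof.
rewrite mulmx_sumr; apply: eq_bigr => x _; rewrite mulmx_sumr.
by apply: eq_bigr => y _; rewrite scalemxAr.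
Qed.

Lemma sum2Mr (C : numClosedFieldType) n (w : 'I_n -> 'I_n -> C) (A : 'M[C]_n) (F : 'I_n -> 'I_n -> 'M[C]_n) :
  \sum_x \sum_y w x y *: (F x y *m A) = (\sum_x \sum_y w x y *: F x y) *m A.
Proof.
rewrite mulmx_suml; apply: eq_bigr => x _; rewrite mulmx_suml.
by apply: eq_bigr => y _; rewrite scalemxAl.
Qed.

Lemma sum2Z (C : numClosedFieldType) n (w : 'I_n -> 'I_n -> C) (c : C) (F : 'I_n -> 'I_n -> 'M[C]_n) :
  \sum_x \sum_y w x y *: (c *: F x y) = c *: (\sum_x \sum_y w x y *: F x y).
Proof.
rewrite scaler_sumr; apply: eq_bigr => x _; rewrite scaler_sumr.
by apply: eq_bigr => y _; rewrite !scalerA mulrC.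
Qed.

Lemma sum2k (C : numClosedFieldType) n (k : C) (Q : 'I_n -> 'I_n -> C) (F : 'I_n -> 'I_n -> 'M[C]_n) :
  \sum_x \sum_y (k * Q x y) *: F x y = k *: (\sum_x \sum_y Q x y *: F x y).
Proof.
rewrite scaler_sumr; apply: eq_bigr => x _; rewrite scaler_sumr.
by apply: eq_bigr => y _; rewrite !scalerA.
Qed.

Lemma sum_diag (C : numClosedFieldType) n :
  \sum_(x < n) delta_mx x x = 1%:M :> 'M[C]_n.
Proof.
apply/matrixP => i j; rewrite summxE (bigD1 i) //= big1 ?addr0.
  by rewrite !mxE eqxx /= eq_sym.
by move=> k /negbTE ki; rewrite mxE eq_sym ki.
Qed.

Lemma s1 (C : numClosedFieldType) n (Q : 'M[C]_n) :
  (forall x, \sum_y Q x y = 1) ->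
  \sum_x \sum_y Q x y *: delta_mx x x = 1%:M.
Proof.
move=> HS; rewrite -sum_diag; apply: eq_bigr => x _.
by rewrite -scaler_suml HS scale1r.
Qed.

Lemma s4 (C : numClosedFieldType) n (Q : 'M[C]_n) :
  (forall x y, Q x y = Q y x) -> (forall x, \sum_y Q x y = 1) ->
  \sum_x \sum_y Q x y *: delta_mx y y = 1%:M.
Proof.
move=> Hs HS; rewrite exchange_big /= -(@s1 _ _ Q HS); apply: eq_bigr => x _.
by apply: eq_bigr => y _; rewrite Hs.
Qed.

Lemma s2 (C : numClosedFieldType) n (Q : 'M[C]_n) :
  \sum_x \sum_y Q x y *: delta_mx x y = Q.
Proof. by rewrite [RHS]matrix_sum_delta. Qed.

Lemma s3 (C : numClosedFieldType) n (Q : 'M[C]_n) :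
  (forall x y, Q x y = Q y x) ->
  \sum_x \sum_y Q x y *: delta_mx y x = Q.
Proof.
move=> Hs; rewrite exchange_big /= [RHS]matrix_sum_delta; apply: eq_bigr => x _.
by apply: eq_bigr => y _; rewrite Hs.
Qed.

Lemma s0 (C : numClosedFieldType) n (Q : 'M[C]_n) :
  (forall x, \sum_y Q x y = 1) -> \sum_x \sum_y Q x y = n%:R.
Proof.
move=> HS; under eq_bigr do rewrite HS.
by rewrite sumr_const card_ord.
Qed.

Lemma sum2N (R : zmodType) n (F : 'I_n -> 'I_n -> R) :
  \sum_x \sum_y - F x y = - \sum_x \sum_y F x y.
Proof. by rewrite -sumrN; apply: eq_bigr => x _; rewrite sumrN. Qed.

Lemma sum2c (C : numClosedFieldType) n (Q : 'I_n -> 'I_n -> C) (A : 'M[C]_n) :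
  \sum_x \sum_y Q x y *: A = (\sum_x \sum_y Q x y) *: A.
Proof. rewrite scaler_suml; apply: eq_bigr => x _; by rewrite scaler_suml. Qed.

Lemma Lop_eq (C : numClosedFieldType) N (Q A : 'M[C]_N) (x0 : 'I_N) :
  (forall x y, Q x y = Q y x) -> (forall x, \sum_y Q x y = 1) ->
  (forall x, A x x = A x0 x0) -> N%:R != 0 :> C -> Lop Q A = L0op Q A.
Proof.
move=> Hs HS Hd HN.
have trA : \tr A = N%:R * A x0 x0.
  rewrite /mxtrace; under eq_bigr do rewrite Hd.
  by rewrite sumr_const card_ord mulr_natl.
rewrite /Lop /L0op trA.
under eq_bigr do under eq_bigr do rewrite Texp Hd !scalerDr ?scalerN.
rewrite !sum2D !sum2N !sum2Z !sum2Ml !sum2Mr !sum2k s1 // s2 s3 // s4 // sum2c s0 //.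
rewrite -!scalemxAr -!scalemxAl mulmx1 mul1mx.
move: (A *m Q) (Q *m A) => AQ QA.
apply/matrixP => i j; rewrite !mxE.
by field.
Qed.
Lemma JQ (C : numClosedFieldType) N (Q : 'M[C]_N) :
  (forall x y, Q x y = Q y x) -> (forall x, \sum_y Q x y = 1) ->
  Jmx C N *m Q = Jmx C N.
Proof.
move=> Hs HS; apply/matrixP => i j; rewrite !mxE.
under eq_bigr do rewrite mxE Hs.
by rewrite -mulr_sumr HS mulr1.
Qed.

Lemma QJ (C : numClosedFieldType) N (Q : 'M[C]_N) :
  (forall x, \sum_y Q x y = 1) ->
  Q *m Jmx C N = Jmx C N.
Proof.
move=> HS; apply/matrixP => i j; rewrite !mxE.
under eq_bigr do rewrite mxE.
by rewrite -mulr_suml HS mul1r.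
Qed.

Lemma trJ (C : numClosedFieldType) N : N%:R != 0 :> C -> \tr (Jmx C N) = 1.
Proof.
move=> HN; rewrite /mxtrace; under eq_bigr do rewrite mxE.
by rewrite sumr_const card_ord -[_ *+ N]mulr_natr mulVf.
Qed.

Lemma L0_step (C : numClosedFieldType) N (Q : 'M[C]_N) n :
  (forall x y, Q x y = Q y x) -> (forall x, \sum_y Q x y = 1) -> N%:R != 0 :> C ->
  alpha Q n n.+1 = 0 ->
  L0op Q (Jmx C N + \sum_(0 <= s < n.+1) alpha Q n s *: Q ^+ s) =
  Jmx C N + \sum_(0 <= s < n.+2) alpha Q n.+1 s *: Q ^+ s.
Proof.
move=> Hs HS HN Hv.
set S := \sum_(1 <= t < n.+1) alpha Q n t * \tr (Q ^+ t).
have a0 : alpha Q n.+1 0 = 2 / (N%:R ^+ 2) + alpha Q n 0 + 2 / (N%:R ^+ 2) * S by [].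
have a1 : alpha Q n.+1 1 = - (2 / (N%:R ^+ 2)) + (N%:R - 2) / N%:R * alpha Q n 1
           - 2 / (N%:R ^+ 2) * S by [].
have a2 k : alpha Q n.+1 k.+2 = (N%:R - 2) / N%:R * alpha Q n k.+2 + 2 / N%:R * alpha Q n k.+1 by [].
set X := \sum_(0 <= s < n.+1) _.
have trX : \tr X = alpha Q n 0 * N%:R + S.
  rewrite /X raddf_sum /= big_ltn // expr0 mxtraceZ mxtrace1; congr (_ + _).
  by apply: eq_bigr => s _; rewrite mxtraceZ.
have XQ : X *m Q = alpha Q n 0 *: Q + \sum_(0 <= k < n) alpha Q n k.+1 *: Q ^+ k.+2.
  rewrite /X mulmx_suml big_nat_recl // -(scalemxAl (alpha Q n 0) (Q ^+ 0) Q).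
  congr (_ + _); first by rewrite expr0 mul1mx.
  apply: eq_bigr => s _; rewrite -(scalemxAl _ (Q ^+ s.+1) Q).
  by rewrite [Q ^+ s.+2]exprSr.
have QX : Q *m X = alpha Q n 0 *: Q + \sum_(0 <= k < n) alpha Q n k.+1 *: Q ^+ k.+2.
  rewrite /X mulmx_sumr big_nat_recl // -(scalemxAr (alpha Q n 0) Q (Q ^+ 0)).
  congr (_ + _); first by rewrite expr0 mulmx1.
  apply: eq_bigr => s _; rewrite -(scalemxAr _ Q (Q ^+ s.+1)).
  by rewrite [Q ^+ s.+2]exprS.
have XE : X = alpha Q n 0 *: Q ^+ 0 + alpha Q n 1 *: Q ^+ 1 + \sum_(0 <= k < n) alpha Q n k.+2 *: Q ^+ k.+2.
  have -> : X = \sum_(0 <= s < n.+2) alpha Q n s *: Q ^+ s.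
    by rewrite (big_nat_recr n.+1) //= Hv scale0r addr0.
  rewrite big_nat_recl // big_nat_recl //.
  by rewrite addrA.
rewrite (big_nat_recl n.+1) // (big_nat_recl n) // a0 a1.
under eq_bigr do rewrite a2 scalerDl -!scalerA.
rewrite big_split /= -!scaler_sumr.
rewrite /L0op mxtraceD trJ // trX mulmxDl mulmxDr JQ // QJ // XQ QX XE.
move: (\sum_(0 <= k < n) alpha Q n k.+2 *: Q ^+ k.+2) (\sum_(0 <= k < n) alpha Q n k.+1 *: Q ^+ k.+2) => U V.
rewrite expr1 expr0 -[(1 : 'M[C]_N)]/(1%:M).
apply/matrixP => i j; rewrite !mxE.
by field.
Qed.

Theorem lemma3p1 (C : numClosedFieldType) (N : nat) (Q : 'M[C]_N) :
  (8 < N)%N ->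
  irreducible_mx Q -> stochastic Q -> symmetric_mx Q -> \tr Q = 0 ->
  (forall n s : nat, (n < s)%N -> alpha Q n s = 0) /\
  (forall n : nat,
     iter n (L0op Q) (Jmx C N) =
     Jmx C N + \sum_(0 <= s < n.+1) alpha Q n s *: Q ^+ s) /\
  (walk_regular Q ->
   forall n : nat,
     iter n (Lop Q) (Jmx C N) = iter n (L0op Q) (Jmx C N) /\
     iter n (Lop Q) (Jmx C N) =
     Jmx C N + \sum_(0 <= s < n.+1) alpha Q n s *: Q ^+ s).
Proof.
move=> hN _ [_ HS] Hs _.
have HN : N%:R != 0 :> C by rewrite pnatr_eq0; case: N hN {Q HS Hs}.
have Hv : forall n s : nat, (n < s)%N -> alpha Q n s = 0.
  elim=> [|n IH] s //= ns.
  case: s ns => [|[|s]] //= ns.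
  by rewrite !IH ?mulr0 ?addr0 // ltnW.
have P2 : forall n : nat,
     iter n (L0op Q) (Jmx C N) =
     Jmx C N + \sum_(0 <= s < n.+1) alpha Q n s *: Q ^+ s.
  elim=> [|n IH].
    by rewrite /= big_nat1 /= scale0r addr0.
  by rewrite iterS IH L0_step // Hv.
split; first exact: Hv.
split; first exact: P2.
move=> Hw.
have x0 : 'I_N by exists 0%N; exact: ltn_trans hN.
have P3 : forall n, iter n (Lop Q) (Jmx C N) = iter n (L0op Q) (Jmx C N).
  elim=> [|n IH] //.
  rewrite !iterS IH; apply: (@Lop_eq C N Q _ x0) => //.
  move=> x; rewrite P2 !mxE !summxE.
  congr (_ + _); apply: eq_bigr => s _; rewrite !mxE.
  by rewrite (Hw s x x0).
move=> n; split; first exact: P3.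
by rewrite P3 P2.
Qed.
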